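(* Let $P,Q$ be finite posets and $p:Q\to P$ a quotient map, and let $\hat p:\mathcal{O}(Q)\to\mathcal{O}(P)$ be the map induced by $p$. Then $\hat p$ is a quotient map of posets (with respect to inclusion), it preserves unions ($\hat p(X\cup Y)=\hat p(X)\cup\hat p(Y)$), it maps join-irreducible elements (nonempty principal down-sets) to join-irreducible elements, and $\hat p(\downarrow x)=\downarrow p(x)$ for all $x\in Q$, i.e. $\hat p\circ\psi=\varphi\circ p$ where $\psi:Q\to\mathcal{O}(Q)$, $\varphi:P\to\mathcal{O}(P)$ are $x\mapsto\downarrow x$.
   Context: For a poset $P$, $\downarrow x=\{m\in P:m\le x\}$; a down-set is $D\subseteq P$ with $q\in D$, $m\le q\Rightarrow m\in D$; $\mathcal{O}(P)$ is the set of all down-sets of $P$ ordered by inclusion (a lattice with $\cup,\cap$). A quotient map between posets is a surjective order-preserving map $\phi:A\to B$ such that for all $a\le b$ in $B$ there are $x\le y$ in $A$ with $\phi(x)=a,\phi(y)=b$. Induced map: for a quotient map $p:Q\to P$ of finite posets, $\hat p(\emptyset)=\emptyset$ and, for a nonempty down-set $A\subseteq Q$ with maximal elements $a_1,\dots,a_k$ (so $A=\bigcup_i\downarrow a_i$), $\hat p(A)=\bigcup_{i=1}^k\downarrow p(a_i)$. *)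

(* Defs.v *)
From HB Require Import structures.
From mathcomp Require Import all_boot all_order.
Set Implicit Arguments. Unset Strict Implicit. Unset Printing Implicit Defensive.
Import Order.Theory.
Local Open Scope order_scope.

Section Defs.
Context {d : Order.disp_t} (P : finPOrderType d).

Definition is_downset (D : {set P}) : bool :=
  [forall q in D, forall m : P, (m <= q) ==> (m \in D)].

Definition dn (x : P) : {set P} := [set m | m <= x].

Definition is_max_in (A : {set P}) (a : P) : bool :=
  (a \in A) && [forall b in A, (a <= b) ==> (b == a)].

Definition join_irreducible_O (D : {set P}) : Prop :=
  is_downset D /\ D != set0 /\
  forall X Y : {set P}, is_downset X -> is_downset Y ->
    D = X :|: Y -> D = X \/ D = Y.
End Defs.

(* Quotient map between posets A and B, where the posets are given by a domain
   predicate and an order relation:  surjective onto the domain of B, order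
   preserving, and every relation a <= b in B lifts to a relation x <= y in A. *)
Definition quotient_map_on {A B : Type} (DA : A -> Prop) (leA : A -> A -> Prop)
    (DB : B -> Prop) (leB : B -> B -> Prop) (f : A -> B) : Prop :=
  (forall x, DA x -> DB (f x)) /\
  (forall b, DB b -> exists2 x, DA x & f x = b) /\
  (forall x y, DA x -> DA y -> leA x y -> leB (f x) (f y)) /\
  (forall a b, DB a -> DB b -> leB a b ->
     exists x y, [/\ DA x, DA y, leA x y, f x = a & f y = b]).

Definition quotient_map {dQ dP : Order.disp_t} {Q : finPOrderType dQ}
    {P : finPOrderType dP} (p : Q -> P) : Prop :=
  quotient_map_on (fun _ => True) (fun x y => x <= y)
                  (fun _ => True) (fun x y => x <= y) p.

Definition induced {dQ dP : Order.disp_t} {Q : finPOrderType dQ}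
    {P : finPOrderType dP} (p : Q -> P) (A : {set Q}) : {set P} :=
  \bigcup_(a in A | is_max_in A a) dn (p a).

(* Main.v *)
Require Import Defs.
From HB Require Import structures.
From mathcomp Require Import all_boot all_order.
Import Order.Theory.
Local Open Scope order_scope.

Section Aux.
Context {d : Order.disp_t} (T : finPOrderType d).

Lemma exists_max (A : {set T}) a : a \in A -> exists2 m, is_max_in A m & a <= m.
Proof.
move=> aA.
have aA' : a \in [set b in A | a <= b] by rewrite inE aA lexx.
case: (arg_maxnP (fun m => #|dn m|) aA') => m mS Hm.
have mS' : m \in [set b in A | a <= b] := mS.
have /andP[mA am] : (m \in A) && (a <= m) by move: mS'; rewrite inE.
exists m => //; rewrite /is_max_in mA /=; apply/forallP => b; apply/implyP => bA.
apply/implyP => mb.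
have bA' : b \in [set b in A | a <= b] by rewrite inE bA (le_trans am mb).
have c : (#|dn b| <= #|dn m|)%N := Hm b bA'.
have sub : dn m \subset dn b.
  by apply/subsetP => z; rewrite !inE => zm; apply: le_trans zm mb.
have eq : dn m = dn b.
  by apply/eqP; rewrite eqEcard sub c.
have : b \in dn m by rewrite eq inE lexx.
by rewrite inE => bm; apply/eqP; apply: le_anti; rewrite bm mb.
Qed.

Lemma downsetP (D : {set T}) :
  reflect (forall q m, q \in D -> m <= q -> m \in D) (is_downset D).
Proof.
apply: (iffP forallP) => H.
  by move=> q m qD mq; have /implyP/(_ qD)/forallP/(_ m)/implyP := H q; apply.
move=> q; apply/implyP => qD; apply/forallP => m; apply/implyP; exact: H.
Qed.

Lemma dn_ji (x : T) : join_irreducible_O (dn x).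
Proof.
split; first by apply/downsetP => q m; rewrite !inE => qx mq; exact: le_trans mq qx.
split; first by apply/set0Pn; exists x; rewrite inE lexx.
move=> X Y /downsetP HX /downsetP HY E.
have : x \in X :|: Y by rewrite -E inE lexx.
rewrite inE => /orP[xX|xY].
- left; apply/eqP; rewrite eqEsubset {2}E subsetUl andbT.
  by apply/subsetP => z; rewrite inE => zx; exact: HX xX zx.
- right; apply/eqP; rewrite eqEsubset {2}E subsetUr andbT.
  by apply/subsetP => z; rewrite inE => zx; exact: HY xY zx.
Qed.

Lemma ji_principal (D : {set T}) : join_irreducible_O D -> exists x, D = dn x.
Proof.
case=> /downsetP HD [/set0Pn [a aD] HJ].
case: (exists_max _ _ aD) => m /andP[mD /forallP mmax] _.
exists m.
have HX : is_downset (dn m).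
  by apply/downsetP => q z; rewrite !inE => qx mq; exact: le_trans mq qx.
have HY : is_downset (D :\ m).
  apply/downsetP => q z; rewrite !inE => /andP[qm qD] zq.
  rewrite (HD q z qD zq) andbT; apply/eqP => zm; subst z.
  have /implyP/(_ qD)/implyP/(_ zq) := mmax q.
  by move/eqP => E; rewrite E eqxx in qm.
have E : D = dn m :|: (D :\ m).
  apply/setP => z; rewrite !inE; case: (eqVneq z m) => [->|zm] /=.
    by rewrite lexx mD.
  case zD: (z \in D); rewrite ?orbT // orbF.
  by apply/esym/negbTE/negP => zle; rewrite (HD m z mD zle) in zD.
case: (HJ _ _ HX HY E) => // E'.
by have := mD; rewrite {1}E' !inE eqxx.
Qed.
End Aux.

Section Main.
Context (dQ dP : Order.disp_t) (Q : finPOrderType dQ) (P : finPOrderType dP)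
  (p : Q -> P) (pmono : forall x y, x <= y -> p x <= p y).

Definition F (A : {set Q}) : {set P} := [set y | [exists a in A, y <= p a]].

Lemma inducedE A : induced p A = F A.
Proof.
apply/setP => y; rewrite /induced /F inE; apply/bigcupP/existsP.
  by case=> a /andP[aA _]; rewrite inE => ya; exists a; rewrite aA.
case=> a /andP[aA ya]; case: (@exists_max _ _ A a aA) => m mmax am.
exists m; first by rewrite (andP mmax).1 mmax.
by rewrite inE (le_trans ya (pmono _ _ am)).
Qed.

Lemma F_downset A : is_downset (F A).
Proof.
apply/downsetP => q z; rewrite !inE => /existsP[a /andP[aA qa]] zq.
by apply/existsP; exists a; rewrite aA (le_trans zq qa).
Qed.

Lemma F_pre (psurj : forall b, exists x, p x = b) (B : {set P}) :
  is_downset B -> F [set x | p x \in B] = B.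
Proof.
move/downsetP=> HB; apply/setP => y; rewrite inE; apply/existsP/idP.
  by case=> a; rewrite inE => /andP[aB ya]; exact: HB _ _ aB ya.
move=> yB; case: (psurj y) => x px; exists x; by rewrite inE px yB lexx.
Qed.

Lemma pre_downset (B : {set P}) : is_downset B -> is_downset [set x | p x \in B].
Proof.
move/downsetP=> HB; apply/downsetP => q z; rewrite !inE => qB zq.
exact: HB _ _ qB (pmono _ _ zq).
Qed.

Lemma F_mono (A B : {set Q}) : A \subset B -> F A \subset F B.
Proof.
move/subsetP=> AB; apply/subsetP => y; rewrite !inE => /existsP[a /andP[aA ya]].
by apply/existsP; exists a; rewrite (AB _ aA) ya.
Qed.

Lemma FU X Y : F (X :|: Y) = F X :|: F Y.
Proof.
apply/setP => y; rewrite !inE; apply/existsP/orP.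
  case=> a /andP[]; rewrite inE => /orP[aX|aY] ya.
    by left; apply/existsP; exists a; rewrite aX.
  by right; apply/existsP; exists a; rewrite aY.
case=> /existsP[a /andP[aA ya]]; exists a; by rewrite inE aA ?orbT.
Qed.

Lemma F_dn x : F (dn x) = dn (p x).
Proof.
apply/setP => y; rewrite !inE; apply/existsP/idP.
  by case=> a /andP[]; rewrite inE => ax ya; exact: le_trans ya (pmono _ _ ax).
by move=> yx; exists x; rewrite inE lexx yx.
Qed.
End Main.

Theorem mainTheorem11 (dQ dP : Order.disp_t) (Q : finPOrderType dQ)
    (P : finPOrderType dP) (p : Q -> P) :
  quotient_map p ->
  (* \hat p : O(Q) -> O(P) is a quotient map w.r.t. inclusion *)
  quotient_map_on (fun A : {set Q} => is_downset A)
                  (fun A B : {set Q} => A \subset B)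
                  (fun A : {set P} => is_downset A)
                  (fun A B : {set P} => A \subset B) (induced p) /\
  (* preserves unions *)
  (forall X Y : {set Q}, is_downset X -> is_downset Y ->
     induced p (X :|: Y) = induced p X :|: induced p Y) /\
  (* maps join-irreducibles to join-irreducibles *)
  (forall D : {set Q}, join_irreducible_O D -> join_irreducible_O (induced p D)) /\
  (* \hat p (\downarrow x) = \downarrow p(x) *)
  (forall x : Q, induced p (dn x) = dn (p x)).
Proof.
case=> _ [hsurj [hmono _]].
have pmono : forall x y : Q, x <= y -> p x <= p y by move=> x y; exact: hmono.
have psurj : forall b, exists x, p x = b.
  by move=> b; case: (hsurj b I) => x _ <-; exists x.
have iE := @inducedE _ _ Q P p pmono.
split; [split; [|split; [|split]] | split; [|split]].
- by move=> A _; rewrite iE; exact: F_downset.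
- move=> B hB; exists [set x | p x \in B]; first exact: (pre_downset _ _ _ _ _ pmono).
  by rewrite iE (F_pre _ _ _ _ _ psurj).
- by move=> A B _ _ AB; rewrite !iE; exact: F_mono.
- move=> a b ha hb ab; exists [set x | p x \in a], [set x | p x \in b].
  split; try exact: (pre_downset _ _ _ _ _ pmono); try by rewrite iE (F_pre _ _ _ _ _ psurj).
  apply/subsetP => z; rewrite !inE => za; exact: (subsetP ab).
- by move=> X Y _ _; rewrite !iE FU.
- move=> D /ji_principal [x ->]; rewrite iE (F_dn _ _ _ _ _ pmono); exact: dn_ji.
- by move=> x; rewrite iE (F_dn _ _ _ _ _ pmono).
Qed.
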